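(* For every $\xi \in \Xi^{+}$, $$\phi_D(\xi)=\min_{\mu\in\Xi^{+}}\sum_{x\in\mathcal{X}} H_D(\mu,x)\,\xi(x),\qquad H_D(\mu,x)=\frac{\det^{1/p}[M(\mu)]}{p}\,f^\top(x)M^{-1}(\mu)f(x),$$ and the minimum is attained at $\mu=\xi$.
   Context: $\mathcal{X}$ is a finite set (the design space) and $f:\mathcal{X}\to\mathbb{R}^p$ is a given function. $\Xi$ denotes the set of all probability measures $\xi$ on $\mathcal{X}$ (i.e. $\xi(x)\ge 0$, $\sum_{x\in\mathcal{X}}\xi(x)=1$). The information matrix of $\xi\in\Xi$ is $M(\xi)=\sum_{x\in\mathcal{X}} f(x)f^\top(x)\xi(x)$, and $\Xi^{+}=\{\mu\in\Xi: M(\mu)\text{ is nonsingular}\}$. The $D$-optimality criterion is $\phi_D(\xi)=\det^{1/p}[M(\xi)]$. *)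

(* Defs.v *)
From HB Require Import structures.
From mathcomp Require Import all_boot all_order all_algebra.
From Stdlib Require Import ClassicalEpsilon.
Set Implicit Arguments. Unset Strict Implicit. Unset Printing Implicit Defensive.
Import Order.TTheory GRing.Theory Num.Theory.
Local Open Scope ring_scope.

(* nonnegative p-th root: the (chosen) y >= 0 with y ^+ p = x
   (unique and existing in a real closed field when x >= 0, p > 0) *)
Definition rootr (R : rcfType) (p : nat) (x : R) : R :=
  epsilon (inhabits 0) (fun y : R => 0 <= y /\ y ^+ p = x).

Definition is_design (R : rcfType) (X : finType) (xi : X -> R) : Prop :=
  (forall x, 0 <= xi x) /\ \sum_(x : X) xi x = 1.

Definition infmx (R : rcfType) (X : finType) (p : nat)
    (f : X -> 'cV[R]_p) (xi : X -> R) : 'M[R]_p :=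
  \sum_(x : X) xi x *: (f x *m (f x)^T).

Definition is_nonsing_design (R : rcfType) (X : finType) (p : nat)
    (f : X -> 'cV[R]_p) (xi : X -> R) : Prop :=
  is_design xi /\ infmx f xi \in unitmx.

Definition phiD (R : rcfType) (X : finType) (p : nat)
    (f : X -> 'cV[R]_p) (xi : X -> R) : R :=
  rootr p (\det (infmx f xi)).

Definition HD (R : rcfType) (X : finType) (p : nat)
    (f : X -> 'cV[R]_p) (mu : X -> R) (x : X) : R :=
  phiD f mu / p%:R * ((f x)^T *m invmx (infmx f mu) *m f x) 0 0.

(* Main.v *)
Require Import Defs.
From HB Require Import structures.
From mathcomp Require Import all_boot all_order all_algebra ring.
From Stdlib Require Import ClassicalEpsilon.
Set Implicit Arguments. Unset Strict Implicit. Unset Printing Implicit Defensive.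
Import Order.TTheory GRing.Theory Num.Theory.
Local Open Scope ring_scope.
Section PD.
Variable R : rcfType.

Definition pd n (B : 'M[R]_n) :=
  B^T = B /\ forall v : 'cV_n, v != 0 -> 0 < (v^T *m B *m v) 0 0.

Lemma pd_congr n (P B : 'M[R]_n) : P \in unitmx -> pd B -> pd (P *m B *m P^T).
Proof.
move=> uP [sB qB]; split.
  by rewrite !trmx_mul trmxK sB mulmxA.
move=> v v0.
have -> : v^T *m (P *m B *m P^T) *m v = (P^T *m v)^T *m B *m (P^T *m v).
  by rewrite trmx_mul trmxK !mulmxA.
apply: qB; apply: contraNneq v0 => h.
have uPt : P^T \in unitmx by rewrite unitmx_tr.
by rewrite -(mulKmx uPt v) h mulmx0.
Qed.

Lemma quad_block n (a : 'M[R]_1) b c (C : 'M[R]_n) (x : 'M_1) (y : 'cV_n) :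
  (col_mx x y)^T *m block_mx a b c C *m col_mx x y =
  x^T *m a *m x + x^T *m b *m y + (y^T *m c *m x + y^T *m C *m y).
Proof.
rewrite tr_col_mx mul_row_block mul_row_col !mulmxDl.
by rewrite -!addrA; congr (_ + _); rewrite addrCA.
Qed.

Lemma pd_block n (a : 'M[R]_1) (D : 'M[R]_n) :
  pd (block_mx a 0 0 D) -> pd D /\ 0 < a 0 0.
Proof.
move=> [sB qB]; split; first split.
- by move: sB; rewrite tr_block_mx => /eq_block_mx [].
- move=> v v0; have := qB (col_mx 0 v).
  rewrite col_mx_eq0 (negbTE v0) andbF => /(_ isT).
  by rewrite quad_block !mulmx0 !mul0mx !add0r.
have := qB (col_mx 1%:M 0).
rewrite col_mx_eq0 eqxx andbT => /(_ (oner_neq0 _)).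
by rewrite quad_block !mulmx0 !mul0mx !addr0 trmx1 mulmx1 mul1mx.
Qed.

Lemma pd_diag n (B : 'M[R]_n) i : pd B -> 0 < B i i.
Proof.
move=> [_ qB]; have := qB (delta_mx i 0).
have -> : (delta_mx i 0 : 'cV[R]_n) != 0.
  by apply/negP => /eqP /matrixP /(_ i 0); rewrite !mxE !eqxx => /eqP; rewrite oner_eq0.
move=> /(_ isT).
by rewrite trmx_delta -rowE -colE !mxE.
Qed.

Lemma elim_step n (a : 'M[R]_1) (b : 'rV_n) (C : 'M_n) : a 0 0 != 0 ->
  let E := block_mx 1%:M 0 (- (a 0 0)^-1 *: b^T) 1%:M in
  E *m block_mx a b b^T C *m E^T = block_mx a 0 0 (C - (a 0 0)^-1 *: (b^T *m b))
  /\ \det E = 1.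
Proof.
move=> ha E; split; last by rewrite /E det_lblock !det1 mulr1.
rewrite /E tr_block_mx !trmx1 trmx0 !mulmx_block.
rewrite !mul1mx !mul0mx !addr0 !mulmx1 !mulmx0 ?add0r.
have a0E : a = (a 0 0)%:M by apply: mx11_scalar.
have h1 : - (a 0 0)^-1 *: b^T *m a + b^T = 0.
  rewrite {2}a0E mul_mx_scalar scalerA mulrN mulfV // scaleN1r addNr //.
have h2 : a *m (- (a 0 0)^-1 *: b^T)^T + b = 0.
  have aT : a^T = a by rewrite {1}a0E tr_scalar_mx -a0E.
  by rewrite -[LHS]trmxK linearD /= trmx_mul trmxK aT h1 trmx0.
rewrite h1 h2; congr block_mx.
- by apply/matrixP => i j; rewrite !mxE addr0.
- by apply/matrixP => i j; rewrite !mxE addr0.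
- by rewrite mul0mx add0r -scalemxAl scaleNr addrC.
Qed.
Lemma pd_split n (B : 'M[R]_(1 + n)) : pd B ->
  exists a b C, B = block_mx a b b^T C.
Proof.
move=> [sB _]; exists (ulsubmx B), (ursubmx B), (drsubmx B).
move: sB; rewrite -{1 2}(submxK B) tr_block_mx => /eq_block_mx [_ _ h _].
by rewrite h submxK.
Qed.

Lemma pd_cong1 n (M : 'M[R]_n) : pd M -> exists P : 'M[R]_n, P *m M *m P^T = 1%:M.
Proof.
elim: n M => [|n IH] M pdM.
  by exists 1%:M; apply/matrixP => i; case: i.
move: M pdM; rewrite -[n.+1]/(1 + n)%N => M pdM.
have [a [b [C eM]]] := pd_split pdM.
have a0 : 0 < a 0 0.
  by have := pd_diag (lshift n 0) pdM; rewrite eM block_mxEul.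
have [hE dE] := elim_step b C (lt0r_neq0 a0).
set E := block_mx _ _ _ _ in hE dE.
have uE : E \in unitmx by rewrite unitmxE dE unitr1.
have := pd_congr uE pdM; rewrite eM hE => /pd_block [pdC' _].
have [Q hQ] := IH _ pdC'.
set s := Num.sqrt (a 0 0).
have s0 : 0 < s by rewrite sqrtr_gt0.
exists (block_mx (s^-1)%:M 0 0 Q *m E).
rewrite trmx_mul.
set S := block_mx _ _ _ _.
have -> : S *m E *m block_mx a b b^T C *m (E^T *m S^T) =
   S *m (E *m block_mx a b b^T C *m E^T) *m S^T by rewrite !mulmxA.
rewrite hE /S tr_block_mx !mulmx_block (scalar_mx_block 1 n) !trmx0 ?mulmx0 ?mul0mx ?addr0 ?add0r ?mulmx0 ?mul0mx ?addr0 ?add0r hQ tr_scalar_mx.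
congr block_mx; rewrite {1}(mx11_scalar a) -!scalar_mxM; congr scalar_mx.
have sa : a 0 0 = s * s by rewrite -expr2 sqr_sqrtr // ltW.
by rewrite sa mulrA mulVf ?mul1r ?mulfV // lt0r_neq0.
Qed.
Lemma hadamard n (B : 'M[R]_n) : pd B -> \det B <= \prod_i B i i.
Proof.
elim: n B => [|n IH] B pdB.
  by rewrite det_mx00 big_ord0.
move: B pdB; rewrite -[n.+1]/(1 + n)%N => B pdB.
have [a [b [C eB]]] := pd_split pdB.
have a0 : 0 < a 0 0.
  by have := pd_diag (lshift n 0) pdB; rewrite eB block_mxEul.
have [hE dE] := elim_step b C (lt0r_neq0 a0).
set E := block_mx _ _ _ _ in hE dE.
have uE : E \in unitmx by rewrite unitmxE dE unitr1.
have := pd_congr uE pdB; rewrite eB hE => /pd_block [pdC' _].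
set B' := block_mx a b b^T C.
have -> : \det B' = \det (E *m B' *m E^T) by rewrite !det_mulmx det_tr dE mul1r mulr1.
rewrite hE det_ublock det_mx11 big_split_ord /= big_ord1 block_mxEul.
rewrite ler_pM2l //.
apply: le_trans (IH _ pdC') _.
apply: ler_prod => i _; rewrite block_mxEdr (ltW (pd_diag i pdC')) /=.
rewrite !mxE big_ord1 !mxE lerBlDr lerDl; apply: mulr_ge0.
  by rewrite invr_ge0 ltW.
by rewrite -expr2 sqr_ge0.
Qed.
Lemma pd_det n (M : 'M[R]_n) : pd M -> 0 < \det M.
Proof.
move=> /pd_cong1 [P hP].
have h : \det M * (\det P ^+ 2) = 1.
  by rewrite -(det1 R n) -hP !det_mulmx det_tr; ring.
have dP : \det P != 0 by apply: contra_eq_neq h => ->; rewrite expr0n mulr0 eq_sym oner_eq0.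
have dP2 : 0 < \det P ^+ 2 by rewrite exprn_even_gt0.
by rewrite -(pmulr_lgt0 _ dP2) h ltr01.
Qed.
Lemma det_trace n (M N : 'M[R]_n) : pd M -> pd N ->
  0 <= \tr (invmx M *m N) /\ \det N <= \det M * (\tr (invmx M *m N) / n%:R) ^+ n.
Proof.
move=> pdM pdN.
have dM := pd_det pdM.
have uM : M \in unitmx by rewrite unitmxE unitfE lt0r_neq0.
have [P hP] := pd_cong1 pdM.
have h : \det M * (\det P ^+ 2) = 1.
  by rewrite -(det1 R n) -hP !det_mulmx det_tr; ring.
have uP : P \in unitmx.
  rewrite unitmxE unitfE; apply: contra_eq_neq h => ->.
  by rewrite expr0n mulr0 eq_sym oner_eq0.
have pdB := pd_congr uP pdN.
set B := P *m N *m P^T in pdB.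
have eN : \det N = \det M * \det B.
  by rewrite /B !det_mulmx det_tr -[LHS]mulr1 -h; ring.
have iM : invmx M = P^T *m P.
  have h1 : P^T *m (P *m M) = 1%:M by apply: mulmx1C.
  by rewrite -[RHS](mulmxK uM) -(mulmxA (P^T)) h1 mul1mx.
have tB : \tr (invmx M *m N) = \sum_i B i i.
  by rewrite iM -mulmxA mxtrace_mulC.
rewrite eN tB ler_pM2l //; split.
  by apply: sumr_ge0 => i _; apply: ltW; apply: pd_diag.
apply: le_trans (hadamard pdB) _.
have := leif_AGM (A := [pred i : 'I_n | true]) (E := fun i => B i i).
rewrite /= cardT size_enum_ord => /(_ _) [].
  by move=> i _; apply: ltW; apply: pd_diag.
by [].
Qed.

Lemma rootrP p (x : R) : (0 < p)%N -> 0 <= x -> 0 <= rootr p x /\ rootr p x ^+ p = x.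
Proof.
move=> hp hx; rewrite /rootr.
apply: (epsilon_spec (inhabits 0) (fun y : R => 0 <= y /\ y ^+ p = x)).
have [y /andP [y0 _] ry] : exists2 y, 0 <= y <= 1 + x & root ('X^p - x%:P) y.
  apply: poly_ivt; first by rewrite addr_ge0.
  rewrite !hornerE expr0n -(prednK hp) /= sub0r oppr_le0 hx /= subr_ge0.
  rewrite prednK //; apply: (le_trans _ (ler_eXnr hp _)); first by rewrite lerDr.
  by rewrite lerDl.
by exists y; split => //; move: ry; rewrite rootE !hornerE subr_eq0 => /eqP.
Qed.

Variables (X : finType) (p : nat) (f : X -> 'cV[R]_p).

Lemma infmx_sym xi : (infmx f xi)^T = infmx f xi.
Proof.
rewrite /infmx linear_sum; apply: eq_bigr => x _.
by rewrite linearZ /= trmx_mul trmxK.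
Qed.

Lemma infmx_quad xi (v : 'cV[R]_p) :
  (v^T *m infmx f xi *m v) 0 0 = \sum_x xi x * (((f x)^T *m v) 0 0) ^+ 2.
Proof.
rewrite /infmx mulmx_sumr mulmx_suml summxE; apply: eq_bigr => x _.
rewrite -scalemxAr -scalemxAl mxE; congr (_ * _).
rewrite (mulmxA v^T) -mulmxA.
have -> : v^T *m f x = ((f x)^T *m v)^T by rewrite trmx_mul trmxK.
by rewrite mxE big_ord1 !mxE expr2.
Qed.

Lemma infmx_pd xi : is_nonsing_design f xi -> pd (infmx f xi).
Proof.
move=> [[xi0 _] uM]; split; first exact: infmx_sym.
move=> v v0; rewrite infmx_quad lt_def sumr_ge0 ?andbT; last first.
  by move=> x _; rewrite mulr_ge0 // sqr_ge0.
apply/eqP => hs.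
have hx := psumr_eq0P (fun x _ => mulr_ge0 (xi0 x) (sqr_ge0 (((f x)^T *m v) 0 0))) hs.
have Mv : infmx f xi *m v = 0.
  rewrite /infmx mulmx_suml big1 // => x _.
  rewrite -scalemxAl -mulmxA [_ *m v]mx11_scalar mul_mx_scalar scalerA.
  have /eqP := hx x isT; rewrite expr2 mulrA mulf_eq0 => /orP [/eqP -> | /eqP ->].
    by rewrite scale0r.
  by rewrite mulr0 scale0r.
by move/eqP: v0; apply; rewrite -(mulKmx uM v) Mv mulmx0.
Qed.

Lemma sum_HD mu xi : \sum_x HD f mu x * xi x =
  phiD f mu / p%:R * \tr (invmx (infmx f mu) *m infmx f xi).
Proof.
rewrite [infmx f xi]/infmx mulmx_sumr linear_sum /= mulr_sumr; apply: eq_bigr => x _.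
rewrite -scalemxAr mxtraceZ mulmxA mxtrace_mulC mulmxA /HD /mxtrace big_ord1.
by ring.
Qed.

End PD.

Theorem theorem1 (R : rcfType) (X : finType) (p : nat) (hp : (0 < p)%N)
    (f : X -> 'cV[R]_p) (xi : X -> R) (hxi : is_nonsing_design f xi) :
  phiD f xi = \sum_(x : X) HD f xi x * xi x /\
  (forall mu : X -> R, is_nonsing_design f mu ->
     phiD f xi <= \sum_(x : X) HD f mu x * xi x).
Proof.
have uN : infmx f xi \in unitmx by case: hxi.
split.
  rewrite sum_HD mulVmx // mxtrace1 divfK //.
  by rewrite pnatr_eq0 -lt0n.
move=> mu hmu; rewrite sum_HD.
have pdM := infmx_pd hmu; have pdN := infmx_pd hxi.
have [T0 hle] := det_trace pdM pdN.
have [y0 hy] := rootrP hp (ltW (pd_det pdN)).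
have [z0 hz] := rootrP hp (ltW (pd_det pdM)).
rewrite /phiD.
set y := rootr p _ in y0 hy *; set z := rootr p _ in z0 hz *.
set T := \tr _ in T0 hle *.
have t0 : 0 <= T / p%:R by rewrite divr_ge0.
rewrite mulrAC -mulrA.
rewrite -(ler_pXn2r hp) ?nnegrE ?mulr_ge0 //; last by rewrite invr_ge0 ler0n.
by rewrite exprMn hz /= hy.
Qed.
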